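(* Let $(G,L,v)$ be a reachable triple, $i\in[4]$ a color, and $D$ a nonnegative integer. Then $0\le P(G,L,v,i,D)\le \tfrac12$.
   Context: Colors are $[4]=\{1,2,3,4\}$. A list-coloring instance $(G,L)$ is a finite simple graph $G=(V,E)$ with $L:V\to 2^{[4]}$. For a vertex $v$, $G_v$ is $G$ with $v$ and its incident edges removed, and $G_{v,w}=(G_v)_w$. If $v$ has neighbors $v_1,\dots,v_d$ (in a fixed order), then for $k\in[d]$ and a color $j$, $L_{k,j}$ is the list assignment on $G_v$ with $L_{k,j}(v_\ell)=L(v_\ell)\setminus\{j\}$ for $\ell<k$ and $L_{k,j}(u)=L(u)$ for all other vertices $u$ (so $L_{1,j}=L$). A triple $(G,L,v)$ with $v\in V$ is reachable if $\deg_G(u)\le3$ and $|L(u)|\ge\deg_G(u)+1$ for every $u\in V$, and moreover $\deg_G(v)\le2$ and $|L(v)|\ge\deg_G(v)+2$. The procedure $P(G,L,v,i,D)$ ($i\in[4]$, $D$ an integer) is defined recursively (empty products equal $1$): (a) If $i\notin L(v)$, return $0$. Otherwise, if $D\le 0$ or $\deg_G(v)=0$, return $1/|L(v)|$. (b) If $\deg_G(v)=1$ with neighbor $v_1$: let $x=P(G_v,L,v_1,i,D-1)$. If $|L(v)|=2$, say $L(v)=\{i,j\}$, let $y=P(G_v,L,v_1,j,D-1)$ and return $\frac{1-x}{2-x-y}$. If $|L(v)|=4$, return $\frac{1-x}{3}$. If $|L(v)|=3$, let $j$ be the unique color in $[4]\setminus L(v)$, $y=P(G_v,L,v_1,j,D-1)$,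 and return $\frac{1-x}{2+y}$. (c) If $\deg_G(v)=2$: order its neighbors $v_1,v_2$ so that $\deg_G(v_1)\ge\deg_G(v_2)$ and, if $\deg_G(v_1)=\deg_G(v_2)=1$, so that $i\notin L(v_1)$ implies $i\notin L(v_2)$. Let $u_1,\dots,u_{d_1}$ be the neighbors of $v_1$ in $G_v$ (fixed order) and for $k\in[d_1]$, $w\in[4]$ let $L'_{k,w}$ be the list assignment on $G_{v,v_1}$ with $L'_{k,w}(u_\ell)=L(u_\ell)\setminus\{w\}$ for $\ell<k$ and $L'_{k,w}(u)=L(u)$ otherwise. Set $x_{k,w}=P(G_{v,v_1},L'_{k,w},u_k,w,D-1)$ for $k\in[d_1]$, $w\in L(v_1)$. For $j\in L(v)$ set $f_j=0$ if $j\notin L(v_1)$ and otherwise $f_j=\frac{\prod_{k=1}^{d_1}(1-x_{k,j})}{\sum_{w\in L(v_1)}\prod_{k=1}^{d_1}(1-x_{k,w})}$, and set $y_j=P(G_v,L_{2,j},v_2,j,D-1)$. Return $\frac{(1-f_i)(1-y_i)}{\sum_{j\in L(v)}(1-f_j)(1-y_j)}$. (d) If $\deg_G(v)=3$ with neighbors $v_1,v_2,v_3$: for $j\in L(v)$ let $x_j=P(G_v,L_{1,j},v_1,j,D-1)$, $y_j=P(G_v,L_{2,j},v_2,j,D-1)$, $z_j=P(G_v,L_{3,j},v_3,j,D-1)$, and return $\frac{(1-x_i)(1-y_i)(1-z_i)}{\sum_{j\in L(v)}(1-x_j)(1-y_j)(1-z_j)}$. For reachable triples, all recursive calls are again on reachable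 triples and case (d) never occurs. *)

(* Defs.v *)
From mathcomp Require Import all_boot all_order all_algebra.
Import Order.TTheory GRing.Theory Num.Theory.
Set Implicit Arguments. Unset Strict Implicit. Unset Printing Implicit Defensive.
Local Open Scope ring_scope.

(* Colors: 'I_4, where (c : 'I_4) stands for the color c+1 of [4] = {1,2,3,4}. *)

Record graph := Graph { gV : seq nat ; gE : rel nat }.

Definition simple_graph (G : graph) : Prop :=
  [/\ uniq (gV G), (forall a b, gE G a b = gE G b a) & (forall a, ~~ gE G a a)].

Definition nbrs (G : graph) (v : nat) : seq nat := [seq u <- gV G | gE G v u].
Definition deg (G : graph) (v : nat) : nat := size (nbrs G v).

Definition delv (G : graph) (v : nat) : graph :=
  Graph [seq u <- gV G | u != v] (gE G).

Definition lists := nat -> {set 'I_4}.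

Definition Lrm (L : lists) (S : seq nat) (j : 'I_4) : lists :=
  fun u => if u \in S then L u :\ j else L u.

Definition reachable (G : graph) (L : lists) (v : nat) : Prop :=
  [/\ simple_graph G, v \in gV G,
      (forall u, u \in gV G -> (deg G u <= 3)%N /\ (deg G u < #|L u|)%N)
    & (deg G v <= 2)%N /\ (deg G v + 2 <= #|L v|)%N].

(* The procedure P(G,L,v,i,D).  [ord G v] is the fixed order in which the
   neighbours of v in G are listed (a permutation of [nbrs G v]; this is a
   hypothesis of the theorem).  Values on inputs not covered by the paper's
   description (unreachable ones) are junk (0). *)
Fixpoint P (R : realFieldType) (ord : graph -> nat -> seq nat) (D : nat)
    (G : graph) (L : lists) (v : nat) (i : 'I_4) {struct D} : R :=
  if i \notin L v then 0 else
  match D with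
  | 0%N => 1 / (#|L v|%:R)
  | D'.+1 =>
    let G1 := delv G v in
    match ord G v with
    | [::] => 1 / (#|L v|%:R)
    | [:: v1] =>
        let x := P R ord D' G1 L v1 i in
        if #|L v| == 2%N then
          let j := odflt i [pick j in L v :\ i] in
          let y := P R ord D' G1 L v1 j in
          (1 - x) / (2 - x - y)
        else if #|L v| == 4%N then (1 - x) / 3
        else if #|L v| == 3%N then
          let j := odflt i [pick j in ~: L v] in
          let y := P R ord D' G1 L v1 j in
          (1 - x) / (2 + y)
        else 0
    | [:: a; b] =>
        let vv := if (deg G b < deg G a)%N then (a, b)
                  else if (deg G a < deg G b)%N then (b, a)
                  else if [&& deg G a == 1%N, i \notin L a & i \in L b]
                       then (b, a) else (a, b) in
        let v1 := vv.1 in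
        let v2 := vv.2 in
        let G2 := delv G1 v1 in
        let us := ord G1 v1 in
        let x (k : nat) (w : 'I_4) :=
            P R ord D' G2 (Lrm L (take k us) w) (nth 0%N us k) w in
        let pr (w : 'I_4) := \prod_(k < size us) (1 - x k w) in
        let f (j : 'I_4) :=
            if j \in L v1 then pr j / \sum_(w in L v1) pr w else 0 in
        let y (j : 'I_4) := P R ord D' G1 (Lrm L [:: v1] j) v2 j in
        (1 - f i) * (1 - y i) / \sum_(j in L v) (1 - f j) * (1 - y j)
    | [:: v1; v2; v3] =>
        let x (j : 'I_4) := P R ord D' G1 L v1 j in
        let y (j : 'I_4) := P R ord D' G1 (Lrm L [:: v1] j) v2 j in
        let z (j : 'I_4) := P R ord D' G1 (Lrm L [:: v1; v2] j) v3 j in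
        (1 - x i) * (1 - y i) * (1 - z i)
          / \sum_(j in L v) (1 - x j) * (1 - y j) * (1 - z j)
    | _ => 0
    end
  end.

(* Main.v *)
Require Import Defs.
From mathcomp Require Import all_boot all_order all_algebra.
From mathcomp Require Import zify ring lra.
Import Order.TTheory GRing.Theory Num.Theory.
Local Open Scope ring_scope.

Lemma nbrs_del G v w : nbrs (delv G v) w = [seq u <- nbrs G w | u != v].
Proof. by rewrite /nbrs /= -!filter_predI; apply: eq_filter => u /=; rewrite andbC. Qed.

Lemma deg_del_le G v w : (deg (delv G v) w <= deg G w)%N.
Proof. by rewrite /deg nbrs_del size_filter count_size. Qed.

Lemma deg_del_lt G v w : v \in nbrs G w -> (deg (delv G v) w < deg G w)%N.
Proof.
move=> vw; rewrite /deg nbrs_del size_filter -(count_predC (predC1 v) (nbrs G w)).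
rewrite -[X in (X < _)%N]addn0 ltn_add2l -has_count.
by apply/hasP; exists v => //=; rewrite negbK.
Qed.

Lemma reach_sub G L v u (L' : lists) (S : seq nat) :
  reachable G L v -> u \in nbrs G v ->
  (forall w, w \notin S -> L' w = L w) ->
  (forall w, w \in S -> w \in nbrs G v /\ (#|L w| <= #|L' w|.+1)%N) ->
  u \notin S -> reachable (delv G v) L' u.
Proof.
case=> [[uV sym irr] vV Hall [dv Lv]] uN HL HS uS.
have vw w : w \in nbrs G v -> v \in nbrs G w.
  by rewrite !mem_filter sym vV => /andP[-> _].
have uV' : u \in gV G by move: uN; rewrite mem_filter => /andP[].
split.
- by split=> //=; exact: filter_uniq.
- rewrite /= mem_filter uV' andbT.
  apply/eqP=> euv; move: uN; rewrite mem_filter euv (negbTE (irr v)).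
  by [].
- move=> w; rewrite mem_filter => /andP[_ wV]; have [d3 dL] := Hall w wV.
  split; first exact: leq_trans (deg_del_le _ _ _) d3.
  case: (boolP (w \in S)) => wS.
  + have [wN Lw] := HS w wS. have := @deg_del_lt G v w (vw _ wN). lia.
  + rewrite HL //; exact: leq_ltn_trans (deg_del_le _ _ _) dL.
- have [d3 dL] := Hall u uV'. have := @deg_del_lt G v u (vw _ uN). rewrite HL //. lia.
Qed.

Lemma nth_notin_take (s : seq nat) k : uniq s -> (k < size s)%N -> nth 0%N s k \notin take k s.
Proof.
move=> us ks; apply/negP => H.
have := index_uniq 0%N ks us.
rewrite -[X in index _ X = _](cat_take_drop k s) index_cat H.
have := index_mem (nth 0%N s k) (take k s); rewrite H size_take.
by case: ifP => h; [move=> a b; move: a; rewrite b ltnn | rewrite ks in h].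
Qed.

Lemma alg (R : realFieldType) (A Lv : {set 'I_4}) (pr y : 'I_4 -> R) (i : 'I_4) :
  Lv = setT -> (exists w, w \in A) -> (forall w, 0 < pr w) ->
  (forall j, 0 <= y j /\ y j <= 1/2) ->
  let f j := if j \in A then pr j / \sum_(w in A) pr w else 0 in
  0 <= (1 - f i) * (1 - y i) / \sum_(j in Lv) (1 - f j) * (1 - y j) /\
  (1 - f i) * (1 - y i) / \sum_(j in Lv) (1 - f j) * (1 - y j) <= 1/2.
Proof.
move=> HLv [w0 w0A] prp yb f.
have Tp : 0 < \sum_(w in A) pr w.
  rewrite (bigD1 w0) //=.
  have h1 := prp w0.
  have h2 : 0 <= \sum_(w in A | w != w0) pr w by apply: sumr_ge0 => w _; apply: ltW.
  lra.
have f0 j : 0 <= f j.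
  rewrite /f; case: ifP => // _; apply: divr_ge0; [exact: ltW | exact: ltW].
have SF : \sum_j f j = 1.
  rewrite /f -big_mkcond /= -mulr_suml divff //; exact: lt0r_neq0.
have f1 j : f j <= 1.
  rewrite -SF (bigD1 j) //=.
  have : 0 <= \sum_(k | k != j) f k by apply: sumr_ge0.
  lra.
have ->: \sum_(j in Lv) (1 - f j) * (1 - y j) = \sum_j (1 - f j) * (1 - y j).
  by apply: eq_bigl => j; rewrite HLv in_setT.
rewrite (bigD1 i) //=.
move: SF; rewrite (bigD1 i) //= => SF.
have S1 : \sum_(j : 'I_4) (1 : R) = 4 by rewrite sumr_const card_ord.
move: S1; rewrite (bigD1 i) //= => S1.
have RA : \sum_(j | j != i) ((1 - f j) / 2) <= \sum_(j | j != i) (1 - f j) * (1 - y j).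
  apply: ler_sum => j _.
  have := f1 j; have := yb j; nra.
move: RA; rewrite -mulr_suml sumrB => RA.
have := f0 i; have := f1 i; have := yb i => ybi f1i f0i.
have ai1 : (1 - f i) * (1 - y i) <= 1 by nra.
have ai0 : 0 <= (1 - f i) * (1 - y i) by nra.
set S := (1 - f i) * (1 - y i) + _.
have SP : 0 < S by rewrite /S; lra.
split; first by apply: divr_ge0 => //; apply: ltW.
rewrite ler_pdivrMr //. rewrite /S; lra.
Qed.

Lemma inv_bound (R : realFieldType) n : (2 <= n)%N -> 0 <= 1 / (n%:R : R) /\ 1 / (n%:R : R) <= 1/2.
Proof.
move=> n2; have h : (2 : R) <= n%:R by rewrite (ler_nat R 2 n).
have np : (0 : R) < n%:R by lra.
split; first by apply: divr_ge0; lra.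
rewrite ler_pdivrMr //; lra.
Qed.

Lemma card4 (A : {set 'I_4}) : (#|A| <= 4)%N.
Proof. by have := max_card (mem A); rewrite card_ord. Qed.

Lemma card4T (A : {set 'I_4}) : (4 <= #|A|)%N -> A = setT.
Proof. move=> h; apply/eqP; rewrite eqEcard subsetT cardsT card_ord //. Qed.

Lemma main (R : realFieldType) (ord : graph -> nat -> seq nat)
    (Hord : forall (H : graph) (u : nat), perm_eq (ord H u) (nbrs H u)) D :
  forall (G : graph) (L : lists) (v : nat) (i : 'I_4),
  reachable G L v ->
  0 <= P R ord D G L v i /\ P R ord D G L v i <= 1 / 2.
Proof.
elim: D => [|D IH] G L v i Hr; have [_ vV Hall [dv Lv]] := Hr.
  rewrite /=; case: ifP => _; first by split; lra.
  apply: inv_bound; exact: leq_trans (leq_addl _ _) Lv.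
have Hs := Hord G v.
have dE : deg G v = size (ord G v) by rewrite (perm_size Hs).
have inN u : u \in ord G v -> u \in nbrs G v by rewrite (perm_mem Hs).
rewrite /=; case: ifP => iL; first by split; lra.
case Eo: (ord G v) => [|v1 [|v2 [|v3 t]]].
- apply: inv_bound; rewrite Eo in dE; move: Lv; rewrite dE; exact.
- rewrite Eo in dE inN.
  have v1N : v1 \in nbrs G v by apply: inN; rewrite inE.
  have H1 : reachable (delv G v) L v1.
    by apply: (@reach_sub G L v v1 L [::]) => // w; rewrite in_nil.
  have [x0 x1] := IH _ _ _ i H1.
  have c4 := card4 (L v).
  have c3 : (3 <= #|L v|)%N by move: Lv; rewrite dE.
  have [->|->] : #|L v| = 3%N \/ #|L v| = 4%N by lia.
  + rewrite /=.
    set j := odflt _ _.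
    have [y0 y1] := IH _ _ _ j H1.
    have yp : 0 < 2 + P R ord D (delv G v) L v1 j by lra.
    split; first by apply: divr_ge0; lra.
    rewrite ler_pdivrMr //; lra.
  + rewrite /=; split; lra.
- rewrite Eo in dE inN.
  have aN : v1 \in nbrs G v by apply: inN; rewrite !inE eqxx.
  have bN : v2 \in nbrs G v by apply: inN; rewrite !inE eqxx orbT.
  have [[uV sym irr] _ _ _] := Hr.
  have uo : uniq (ord G v) by rewrite (perm_uniq Hs); exact: filter_uniq.
  have ab : v1 != v2 by move: uo; rewrite Eo /= inE andbT.
  have LT : L v = setT by apply: card4T; move: Lv; rewrite dE.
  set vv := (if (deg G v2 < deg G v1)%N then _ else _).
  have Hvv : vv = (v1, v2) \/ vv = (v2, v1) by rewrite /vv; repeat case: ifP => _; auto.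
  clearbody vv.
  have [pN qN pq] : [/\ vv.1 \in nbrs G v, vv.2 \in nbrs G v & vv.1 != vv.2].
    by case: Hvv => ->; split => //; rewrite eq_sym.
  case: vv {Hvv} pN qN pq => p q /= pN qN pq.
  have H1 : reachable (delv G v) L p.
    by apply: (@reach_sub G L v p L [::]) => // w; rewrite in_nil.
  set us := ord (delv G v) p.
  have usu : uniq us.
    rewrite /us (perm_uniq (Hord _ _)); apply: filter_uniq; rewrite /=; exact: filter_uniq.
  have IHx : forall (k : 'I_(size us)) w,
      0 <= P R ord D (delv (delv G v) p) (Lrm L (take k us) w) (nth 0%N us k) w /\
      P R ord D (delv (delv G v) p) (Lrm L (take k us) w) (nth 0%N us k) w <= 1/2.
    move=> k w; apply: IH.
    apply: (@reach_sub (delv G v) L p _ _ (take k us)) => //.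
    - by rewrite -(perm_mem (Hord _ _)); apply: mem_nth.
    - by move=> w' /negbTE h; rewrite /Lrm h.
    - move=> w' h; split.
        by rewrite -(perm_mem (Hord _ _)); exact: mem_take h.
      by rewrite /Lrm h (cardsD1 w (L w')); case: (w \in L w').
    - exact: nth_notin_take.
  have IHy : forall j : 'I_4,
      0 <= P R ord D (delv G v) (Lrm L [:: p] j) q j /\
      P R ord D (delv G v) (Lrm L [:: p] j) q j <= 1/2.
    move=> j; apply: IH.
    apply: (@reach_sub G L v q _ [:: p]) => //.
    - by move=> w' /negbTE h; rewrite /Lrm h.
    - move=> w'; rewrite inE => /eqP ->; split => //.
      by rewrite /Lrm inE eqxx (cardsD1 j (L p)); case: (j \in L p).
    - by rewrite inE eq_sym.
  apply: (@alg R (L p) (L v)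
    (fun w => \prod_(k < size us) (1 - P R ord D (delv (delv G v) p) (Lrm L (take k us) w) (nth 0%N us k) w))
    (fun j => P R ord D (delv G v) (Lrm L [:: p] j) q j) i) => //.
  + have [_ _ Hall' _] := H1.
    have pV : p \in gV (delv G v) by case: H1.
    have [_ hp] := Hall' p pV.
    have : (0 < #|L p|)%N by exact: leq_ltn_trans (leq0n _) hp.
    by rewrite card_gt0 => /set0Pn.
  + move=> w; apply: prodr_gt0 => k _; have [_ h] := IHx k w; lra.
- rewrite Eo /= in dE; lia.
Qed.

Theorem proposition7 (R : realFieldType) (ord : graph -> nat -> seq nat)
    (Hord : forall (H : graph) (u : nat), perm_eq (ord H u) (nbrs H u))
    (G : graph) (L : lists) (v : nat) (i : 'I_4) (D : nat) :
  reachable G L v ->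
  0 <= P R ord D G L v i /\ P R ord D G L v i <= 1 / 2.
Proof. exact: main. Qed.
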